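(* Let $G$ be a finite group and suppose $G$ has a subgroup $H$ admitting a nontrivial homomorphism $\phi: H \to \{\pm 1\}$. Suppose further that there is a set $T$ of representatives of the left cosets of $H$ in $G$ such that $c^2 = 1$ for all $c \in T$. Then there is a function $f: G \to \{\pm 1\}$ with $\mathbb{E}_{x\in G} f(x) = 0$ and \[ \Pr_{x,y}\,[f(x)f(y) = f(xy)] \ge \frac{1}{2}\left(1 + \frac{|H|}{|G|}\right), \] where $x,y$ are chosen uniformly and independently from $G$.
   Context: $\mathbb{E}$ denotes the average over the uniform distribution on $G$. *)

(* Defs.v *)
From HB Require Import structures.
From mathcomp Require Import all_boot all_order all_algebra all_fingroup.
Set Implicit Arguments. Unset Strict Implicit. Unset Printing Implicit Defensive.

(* Main.v *)
Require Import Defs.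
From HB Require Import structures.
From mathcomp Require Import all_boot all_order all_algebra all_fingroup.
Import GRing.Theory Num.Theory Order.TTheory.
From mathcomp Require Import ring lra.
Set Implicit Arguments. Unset Strict Implicit.
Local Open Scope group_scope.

Definition pm1 (a : rat) := (a = 1%R \/ a = (-1)%R).

Lemma pm1M a b : pm1 a -> pm1 b -> pm1 (a * b)%R.
Proof. by case=> ->; case=> ->; rewrite /pm1 ?mulr1 ?mulrN1 ?opprK; auto. Qed.

Lemma pm1_sq a : pm1 a -> (a * a = 1)%R.
Proof. by case=> ->; rewrite ?mulr1 ?mulrNN ?mulr1. Qed.

Lemma hom_sum_ge0 (gT : finGroupType) (K : {group gT}) (psi : gT -> rat) :
  (forall x, x \in K -> pm1 (psi x)) ->
  (forall x y, x \in K -> y \in K -> psi (x * y) = (psi x * psi y)%R) ->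
  (0 <= \sum_(x in K) psi x)%R.
Proof.
move=> pm hom.
case: (boolP [exists x in K, psi x == (-1)%R]).
  move/existsP => [a /andP[aK /eqP pa]].
  have E: (\sum_(x in K) psi x = psi a * \sum_(x in K) psi x)%R.
    rewrite mulr_sumr (reindex_inj (mulgI a)) /=.
    apply: eq_big => [x|x xK]; first by rewrite groupMl.
    by rewrite hom // -(groupMl x aK).
  move: E; rewrite pa mulN1r => /eqP; rewrite -subr_eq0 opprK -mulr2n.
  by rewrite mulrn_eq0 /= => /eqP ->.
move/existsPn=> H; apply: sumr_ge0 => x xK.
case: (pm _ xK) => E; first by rewrite E ler01.
by move: (H x); rewrite xK E eqxx.
Qed.

Lemma sum_flip0 (gT : finGroupType) (G : {group gT}) (F : gT -> rat) a :
  a \in G -> (forall g, g \in G -> F (g * a) = (- F g)%R) ->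
  (\sum_(g in G) F g = 0)%R.
Proof.
move=> aG hF.
have E: (\sum_(g in G) F g = - \sum_(g in G) F g)%R.
  rewrite -sumrN (reindex_inj (mulIg a)) /=.
  apply: eq_big => [x|x xG]; first by rewrite groupMr.
  by rewrite hF // -(groupMr x aG).
move/eqP: E; rewrite -subr_eq0 opprK -mulr2n mulrn_eq0 /=.
by move/eqP.
Qed.

Definition eps (gT : finType) (A : {set gT}) (c : gT) : rat :=
  if c \in A then (-1)%R else 1%R.

Lemma eps_sq (gT : finType) (A : {set gT}) c : (eps A c * eps A c = 1)%R.
Proof. by rewrite /eps; case: ifP; rewrite ?mulrNN mulr1. Qed.

Definition tog (gT : finType) (z : gT) (A : {set gT}) :=
  if z \in A then A :\ z else z |: A.

Lemma in_tog (gT : finType) (z w : gT) A :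
  (w \in tog z A) = (if w == z then z \notin A else w \in A).
Proof.
rewrite /tog; case: (boolP (z \in A)) => zA; rewrite !inE;
  case: eqP => [->|]//=; by rewrite ?zA.
Qed.

Lemma togK (gT : finType) (z : gT) : involutive (tog z).
Proof.
move=> A; apply/setP=> w; rewrite !in_tog; case: eqP => [->|]//.
by rewrite eqxx negbK.
Qed.

Lemma eps_sum0 (gT : finType) (z p q s : gT) :
  z != p -> z != q -> z != s ->
  (\sum_(A : {set gT}) eps A z * eps A p * eps A q * eps A s = 0)%R.
Proof.
move=> zp zq zs.
set S := (\sum_(A : {set gT}) _)%R.
have E : S = (- S)%R.
  rewrite {1}/S (reindex_inj (inv_inj (togK z))) /= /S -sumrN.
  apply: eq_bigr => A _.
  have ew : forall w, z != w -> eps (tog z A) w = eps A w.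
    by move=> w zw; rewrite /eps in_tog eq_sym (negbTE zw).
  have ez : eps (tog z A) z = (- eps A z)%R.
    by rewrite /eps in_tog eqxx; case: (z \in A); rewrite ?opprK.
  by rewrite ez !ew // !mulNr.
move/eqP: E; rewrite -subr_eq0 opprK -mulr2n mulrn_eq0 /=.
by move/eqP.
Qed.

Lemma ind_pm1 (a b c : rat) : pm1 a -> pm1 b -> pm1 c ->
  ((if a * b == c then 1 else 0) = (1 + a * b * c) / 2)%R.
Proof. by case=> ->; case=> ->; case=> ->. Qed.

Lemma eps_pairA (gT : finType) (A : {set gT}) c d :
  (eps A c * eps A d * eps A c * eps A d = 1)%R.
Proof.
transitivity ((eps A c * eps A c) * (eps A d * eps A d))%R; first by ring.
by rewrite !eps_sq mulr1.
Qed.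

Lemma eps_pairB (gT : finType) (A : {set gT}) c d :
  (eps A c * eps A c * eps A d * eps A d = 1)%R.
Proof.
transitivity ((eps A c * eps A c) * (eps A d * eps A d))%R; first by ring.
by rewrite !eps_sq mulr1.
Qed.

Lemma eps_pairC (gT : finType) (A : {set gT}) c d :
  (eps A c * eps A d * eps A d * eps A c = 1)%R.
Proof.
transitivity ((eps A c * eps A c) * (eps A d * eps A d))%R; first by ring.
by rewrite !eps_sq mulr1.
Qed.

Theorem theorem4 (gT : finGroupType) (G H : {group gT}) (phi : gT -> rat)
    (T : {set gT}) :
  H \subset G ->
  (forall h, h \in H -> phi h = 1%R \/ phi h = (-1)%R) ->
  (forall x y, x \in H -> y \in H -> phi (x * y) = (phi x * phi y)%R) ->
  (exists2 h, h \in H & phi h = (-1)%R) ->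
  is_transversal T (lcosets H G) G ->
  (forall c, c \in T -> c ^+ 2 = 1) ->
  exists f : gT -> rat,
    [/\ forall x, x \in G -> f x = 1%R \/ f x = (-1)%R,
        ((\sum_(x in G) f x) / #|G|%:R = 0)%R
      & ((1 / 2 : rat) * (1 + #|H|%:R / #|G|%:R) <=
         #|[set p in setX G G | (f p.1 * f p.2)%R == f (p.1 * p.2)%g]|%:R
           / #|G|%:R ^+ 2)%R].
Proof.
move=> sHG phipm phiM [h0 h0H ph0] trT Tinv.
have sTG : T \subset G := transversal_sub trT.
have HG : forall x, x \in H -> x \in G := subsetP sHG.
have TG : forall x, x \in T -> x \in G := subsetP sTG.
pose r g := transversal_repr 1 T (g *: H).
have cosP : forall g, g \in G -> g *: H \in lcosets H G.
  by move=> g gG; rewrite mem_lcosets mulGSid.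
have rT : forall g, g \in G -> r g \in T.
  by move=> g gG; apply: (repr_mem_transversal trT 1 (cosP g gG)).
have rin : forall g, g \in G -> (r g)^-1 * g \in H.
  move=> g gG; have := repr_mem_pblock trT 1 (cosP g gG).
  by rewrite mem_lcoset -groupV invMg invgK.
have req : forall g c, g \in G -> c \in T -> c^-1 * g \in H -> r g = c.
  move=> g c gG cT cg.
  have : c \in T :&: g *: H by rewrite inE cT mem_lcoset -groupV invMg invgK.
  by rewrite (setI_transversal_pblock trT 1 (cosP g gG)) => /set1P.
pose c0 := r 1.
have c0T : c0 \in T := rT 1 (group1 G).
have c0H : c0 \in H by have := rin 1 (group1 G); rewrite mulg1 groupV.
have Tinv' : forall c, c \in T -> c^-1 = c.
  move=> c cT; have := Tinv c cT; rewrite expg2 => cc.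
  by rewrite -[c^-1]mulg1 -cc mulKg.
have phisq : forall x, x \in H -> (phi x * phi x = 1)%R.
  by move=> x xH; apply: pm1_sq; apply: phipm.
have phi1 : phi 1 = 1%R.
  have := phiM 1 1 (group1 H) (group1 H); rewrite mulg1.
  by case: (phipm 1 (group1 H)) => -> //; rewrite mulrNN mulr1.
have phiV : forall x, x \in H -> phi x^-1 = phi x.
  move=> x xH; have := phiM x x^-1 xH (groupVr xH); rewrite mulgV phi1 => E.
  by rewrite -[phi x^-1]mul1r -(phisq x xH) -mulrA -E mulr1.
  have xHc : forall z, z \in G -> (z \in H) = (r z == c0).
    move=> z zG; apply/idP/eqP => [zH | e].
      by apply: req => //; apply: groupM => //; apply: groupVr.
    by have := rin z zG; rewrite e (groupMl _ (groupVr c0H)).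
have epm : forall (A : {set gT}) c, pm1 (eps A c).
  by move=> A c; rewrite /eps /pm1; case: ifP; auto.
pose fA (A : {set gT}) g :=
  (phi c0 * eps A c0 * eps A (r g) * phi ((r g)^-1 * g)%g)%R.
have fApm : forall A g, g \in G -> pm1 (fA A g).
  move=> A g gG; apply: pm1M; last by apply: phipm; apply: rin.
  by apply: pm1M => //; apply: pm1M => //; apply: phipm.
have fAmul : forall A g k, g \in G -> k \in H -> fA A (g * k) = (fA A g * phi k)%R.
  move=> A g k gG kH; rewrite /fA.
  have -> : r (g * k) = r g.
    apply: req; first exact: (groupM gG (HG k kH)).
      by apply: rT.
    by rewrite mulgA; apply: groupM => //; apply: rin.
  by rewrite mulgA phiM ?rin // mulrA.
have mean : forall A, (\sum_(g in G) fA A g = 0)%R.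
  move=> A; apply: (sum_flip0 (a := h0)); first exact: HG.
  by move=> g gG; rewrite fAmul // ph0 mulrN1.
have count : forall f : gT -> rat, (forall g, g \in G -> pm1 (f g)) ->
   (#|[set p in setX G G | (f p.1 * f p.2)%R == f (p.1 * p.2)%g]|%:R =
     (#|G|%:R ^+ 2 + \sum_(x in G) \sum_(y in G) f x * f y * f (x * y)%g) / 2)%R.
  move=> f fpm.
  have E1 : (#|[set p in setX G G | (f p.1 * f p.2)%R == f (p.1 * p.2)%g]|%:R
     = \sum_(x in G) \sum_(y in G)
          (if (f x * f y)%R == f (x * y)%g then 1 else 0) :> rat)%R.
    rewrite pair_big_dep /= -sum1_card natr_sum big_mkcond [RHS]big_mkcond /=.
    apply: eq_bigr => -[a b] _; rewrite !inE /=.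
    by case: (a \in G); case: (b \in G); case: (_ == _).
  rewrite E1.
  have E2 : (\sum_(x in G) \sum_(y in G)
          (if (f x * f y)%R == f (x * y)%g then 1 else 0) =
       \sum_(x in G) \sum_(y in G) (1 + f x * f y * f (x * y)%g) / 2 :> rat)%R.
    apply: eq_bigr => x xG; apply: eq_bigr => y yG.
    by apply: ind_pm1; apply: fpm => //; apply: groupM.
  have Eg : (#|G|%:R ^+ 2 = \sum_(x in G) \sum_(y in G) (1:rat))%R.
    by rewrite !sumr_const expr2 mulr_natr.
  rewrite E2 Eg -big_split /= mulr_suml; apply: eq_bigr => x xG.
  by rewrite -big_split /= mulr_suml.
pose S A := (\sum_(x in G) \sum_(y in G) fA A x * fA A y * fA A (x * y)%g)%R.
have key : exists A, (#|G|%:R * #|H|%:R <= S A)%R.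
  pose V x y := (phi c0 * phi ((r x)^-1 * x)%g * phi ((r y)^-1 * y)%g
                  * phi ((r (x * y)%g)^-1 * (x * y))%g)%R.
  pose W x y : rat := if y \in H then 1%R
      else if (x \in H) && (r (x * y) == r y) then V x y
      else if (r x == r y) && (x * y \in H) then V x y else 0%R.
  pose N : rat := (\sum_(A : {set gT}) 1)%R.
  have N0 : (0 <= N)%R by apply: sumr_ge0.
  have avgW : forall x y, x \in G -> y \in G ->
      (\sum_(A : {set gT}) fA A x * fA A y * fA A (x * y)%g = N * W x y)%R.
    move=> x y xG yG.
    have xyG : (x * y)%g \in G by apply: groupM.
    have E : forall A, (fA A x * fA A y * fA A (x * y)%g =
        (eps A c0 * eps A (r x) * eps A (r y) * eps A (r (x * y)%g)) * V x y)%R.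
      move=> A; rewrite /fA /V.
      set p := phi c0; set a := eps A c0.
      have pp : (p * p = 1)%R by apply: phisq.
      have aa : (a * a = 1)%R by apply: eps_sq.
      set b := eps A (r x); set c := eps A (r y); set d := eps A (r (x * y)%g).
      set u := phi ((r x)^-1 * x)%g; set v := phi ((r y)^-1 * y)%g.
      set w := phi ((r (x * y)%g)^-1 * (x * y))%g.
      transitivity ((p * p) * (a * a) * ((a * b * c * d) * (p * u * v * w)))%R;
        first by ring.
      by rewrite pp aa !mul1r.
    under eq_bigr => A _ do rewrite E.
    rewrite -mulr_suml.
    rewrite /W.
    case: (boolP (y \in H)) => yH.
      have ry : r y = c0 by apply/eqP; rewrite -xHc.
      have rxy : r (x * y)%g = r x.
        apply: req => //; first by apply: rT.
        by rewrite mulgA; apply: groupM => //; apply: rin.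
      have -> : V x y = 1%R.
        rewrite /V ry rxy mulgA (phiM _ _ (rin x xG) yH) (phiM _ _ (groupVr c0H) yH).
        rewrite phiV //.
        set p := phi c0; set u := phi _; set v := phi y.
        transitivity ((p * p) * (u * u) * (v * v))%R; first by ring.
        by rewrite /p /v !phisq ?mul1r // rin.
      rewrite ry rxy; congr (_ * _)%R; apply: eq_bigr => A _; exact: eps_pairA.
    have ryc : r y != c0 by rewrite -xHc.
    case: (boolP ((x \in H) && (r (x * y)%g == r y))) => [/andP[xH /eqP exy] | P1].
      have rx : r x = c0 by apply/eqP; rewrite -xHc.
      rewrite rx exy; congr (_ * _)%R; apply: eq_bigr => A _; exact: eps_pairB.
    case: (boolP ((r x == r y) && ((x * y)%g \in H))) => [/andP[/eqP exy xyH] | P2].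
      have rxy : r (x * y)%g = c0 by apply/eqP; rewrite -xHc.
      rewrite exy rxy; congr (_ * _)%R; apply: eq_bigr => A _; exact: eps_pairC.
    rewrite mulr0; apply/eqP; rewrite mulf_eq0; apply/orP; left; apply/eqP.
    rewrite (xHc x xG) in P1; rewrite (xHc _ xyG) in P2.
    case: (eqVneq (r y) (r x)) => [dc | dc].
      rewrite dc eqxx /= in P2.
      by apply: eps_sum0; rewrite ?(eq_sym c0) -?dc.
    case: (eqVneq (r y) (r (x * y)%g)) => de.
      rewrite -de eqxx andbT in P1.
      by apply: eps_sum0; rewrite ?(eq_sym c0) -?de.
    transitivity (\sum_(A : {set gT}) eps A (r y) * eps A c0 * eps A (r x)
                     * eps A (r (x * y)%g))%R.
      by apply: eq_bigr => A _; ring.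
    by apply: eps_sum0; rewrite // eq_sym.
  have Wsum : (#|G|%:R * #|H|%:R <= \sum_(x in G) \sum_(y in G) W x y)%R.
    rewrite exchange_big /=.
    have -> : (#|G|%:R * #|H|%:R =
               \sum_(y in G) (if y \in H then #|G|%:R else 0) :> rat)%R.
      rewrite -big_mkcondr /=.
      rewrite (eq_bigl (fun y => y \in H)) => [|y]; last first.
        by case: (boolP (y \in H)) => yH; rewrite ?andbT ?andbF // HG.
      by rewrite sumr_const mulr_natr.
    apply: ler_sum => y yG.
    case: (boolP (y \in H)) => yH.
      by rewrite /W yH sumr_const.
    have ryc : r y != c0 by rewrite -xHc.
    have -> : (\sum_(x in G) W x y =
       \sum_(x in G) (if (x \in H) && (r (x * y)%g == r y) then V x y else 0)
     + \sum_(x in G) (if (r x == r y) && ((x * y)%g \in H) then V x y else 0))%R.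
      rewrite -big_split /=; apply: eq_bigr => x xG; rewrite /W (negbTE yH).
      case: ifP => [/andP[xH _] | _]; last by rewrite add0r.
      have rx : r x = c0 by apply/eqP; rewrite -xHc.
      by rewrite rx eq_sym (negbTE ryc) /= addr0.
    apply: addr_ge0.
      pose K1 := (H :&: H :^ y^-1)%G.
      have inK : forall x, (x \in K1) = (x \in H) && (x ^ y \in H).
        by move=> x; rewrite inE mem_conjg invgK.
      have idn : forall x, (r y)^-1 * (x * y) = ((r y)^-1 * y) * x ^ y.
        by move=> x; rewrite conjgE !mulgA mulgK.
      have -> : (\sum_(x in G) (if (x \in H) && (r (x * y)%g == r y) then V x y else 0)
               = \sum_(x in K1) (phi x * phi (x ^ y)%g))%R.
        rewrite big_mkcond [RHS]big_mkcond; apply: eq_bigr => x _.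
        rewrite inK.
        case: (boolP (x \in H)) => xH /=; last by case: (x \in G).
        rewrite (HG x xH).
        have eq1 : (r (x * y)%g == r y) = (x ^ y \in H).
          apply/eqP/idP => [e | xyH].
            have := rin _ (groupM (HG x xH) yG); rewrite e idn => h1.
            by rewrite -(groupMl _ (rin y yG)).
          apply: req; [apply: groupM => //; apply: HG | apply: rT | ] => //.
          by rewrite idn; apply: groupM => //; apply: rin.
        rewrite eq1; case: ifP => // xyH.
        have rx : r x = c0 by apply/eqP; rewrite -xHc ?HG.
        rewrite /V rx (_ : r (x * y)%g = r y); last by apply/eqP; rewrite eq1.
        rewrite idn (phiM _ _ (rin y yG) xyH) (phiM _ _ (groupVr c0H) xH) phiV //.
        set p := phi c0; set k := phi ((r y)^-1 * y).
        transitivity ((p * p) * (k * k) * (phi x * phi (x ^ y)%g))%R; first by ring.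
        by rewrite /p /k !phisq ?mul1r //; apply: rin.
      apply: hom_sum_ge0 => [x | x z]; rewrite ?inK.
        by case/andP=> xH xyH; apply: pm1M; apply: phipm.
      case/andP=> xH xyH /andP[zH zyH].
      by rewrite conjMg (phiM x z) // (phiM (x ^ y) (z ^ y)) //; ring.
    set d := r y.
    have dT : d \in T := rT y yG.
    have dG := TG d dT.
    have dd : d^-1 = d := Tinv' d dT.
    have kH : d^-1 * y \in H := rin y yG.
    have d2 : d * d = 1 by rewrite -expg2 Tinv.
    pose K2 := (H :&: H :^ d)%G.
    have inK2 : forall u, (u \in K2) = (u \in H) && (u ^ d^-1 \in H).
      by move=> u; rewrite inE mem_conjg.
    have iden : forall u, d * u * y = (u ^ d^-1) * (d^-1 * y).
      move=> u; rewrite conjgE invgK dd !mulgA.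
      by rewrite -(mulgA (d * u) d d) d2 mulg1.
    have -> : (\sum_(x in G) (if (r x == d) && ((x * y)%g \in H) then V x y else 0)
               = \sum_(u in K2) (phi u * phi (u ^ d^-1)%g))%R.
      rewrite big_mkcond (reindex_inj (mulgI d)) /= [RHS]big_mkcond.
      apply: eq_bigr => u _; rewrite inK2.
      case: (boolP (u \in H)) => uH /=; last first.
        case: ifP => // duG; case: ifP => // /andP[/eqP e _].
        by have := rin _ duG; rewrite e mulKg (negbTE uH).
      have duG : d * u \in G by apply: groupM => //; apply: HG.
      have rdu : r (d * u) = d by apply: req => //; rewrite mulKg.
      rewrite duG rdu eqxx /= iden (groupMr _ kH).
      case: ifP => // wH.
      have rc : r (d * u * y) = c0.
        apply/eqP; rewrite -xHc; first by rewrite iden; apply: groupM.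
        by apply: groupM.
      rewrite /V rdu rc mulKg iden.
      rewrite (phiM _ _ (groupVr c0H)) ?phiV ?(phiM _ _ wH kH) //; last by apply: groupM.
      set p := phi c0; set k := phi (d^-1 * y).
      transitivity ((p * p) * (k * k) * (phi u * phi (u ^ d^-1)%g))%R; first by ring.
      by rewrite /p /k !phisq ?mul1r.
    apply: hom_sum_ge0 => [x | x z]; rewrite ?inK2.
      by case/andP=> xH xyH; apply: pm1M; apply: phipm.
    case/andP=> xH xyH /andP[zH zyH].
    by rewrite conjMg (phiM x z) // (phiM (x ^ d^-1) (z ^ d^-1)) //; ring.
  have SumS : (\sum_(A : {set gT}) S A = N * \sum_(x in G) \sum_(y in G) W x y)%R.
    rewrite /S exchange_big /= mulr_sumr; apply: eq_bigr => x xG.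
    rewrite exchange_big /= mulr_sumr; apply: eq_bigr => y yG.
    exact: avgW.
  case: (boolP [exists A : {set gT}, (#|G|%:R * #|H|%:R <= S A)%R]).
    by move/existsP.
  move/existsPn => Hn; exfalso.
  have : (\sum_(A : {set gT}) S A < \sum_(A : {set gT}) (#|G|%:R * #|H|%:R))%R.
    apply: ltr_sum; first by apply/hasP; exists set0 => //; exact: mem_index_enum.
    by move=> A _; rewrite ltNge Hn.
  have -> : (\sum_(A : {set gT}) (#|G|%:R * #|H|%:R) = N * (#|G|%:R * #|H|%:R) :> rat)%R.
    by rewrite /N mulr_suml; apply: eq_bigr => A _; rewrite mul1r.
  by rewrite SumS ltNge (ler_wpM2l N0 Wsum).
have Gpos : (0 < #|G|%:R :> rat)%R.
  by rewrite ltr0n; apply/card_gt0P; exists 1; apply: group1.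
case: key => A SA.
exists (fA A); split.
- by move=> x xG; apply: fApm.
- by rewrite mean mul0r.
rewrite (count _ (fApm A)) -/(S A) -subr_ge0.
set g := (#|G|%:R : rat) in Gpos SA *.
set h := (#|H|%:R : rat) in SA *.
have -> : ((g ^+ 2 + S A) / 2 / g ^+ 2 - 1 / 2 * (1 + h / g) = (S A - g * h) / (2 * g ^+ 2))%R.
  by field; rewrite lt0r_neq0.
apply: divr_ge0; first by rewrite subr_ge0.
by rewrite mulr_ge0 // exprn_ge0 // ltW.
Qed.
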